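(* Let $\boldsymbol\eta$ be a standard max-stable process with generator $\mathbf Z$, and let $G(f)=P(\boldsymbol\eta\le f)=\exp(-\|f\|_D)$, $f\in\bar E^-[0,1]$, be its functional distribution function. Then: (i) $G$ is continuous with respect to the sup-norm $\|\cdot\|_\infty$; (ii) for every $f\in\bar E^-[0,1]$ we have $P(\boldsymbol\eta\le f)=P(\boldsymbol\eta<f)$; in particular, the sets $\{g\in\bar C^-[0,1]: g(t)\le f(t)\text{ for all }t\in[0,1]\}$ are continuity sets of the distribution of $\boldsymbol\eta$ on $(\bar C^-[0,1],\|\cdot\|_\infty)$.
   Context: $E[0,1]$: bounded functions on $[0,1]$ with finitely many discontinuities; $\bar E^-[0,1]=\{f\in E[0,1]:f\le 0\}$; $\bar C^-[0,1]=\{f\in C[0,1]:f\le 0\}$. $\boldsymbol\eta\le f$ (resp. $<$) means $\eta_t\le f(t)$ (resp. $<$) for all $t\in[0,1]$. A generator is a process $\mathbf Z$ with continuous nonnegative paths, $\max_t Z_t=m$ a.s. for a constant $m\in[1,\infty)$, and $E(Z_t)=1$ for all $t$; the $D$-norm is $\|f\|_D=E(\sup_{t\in[0,1]}(|f(t)|Z_t))$. A standard max-stable process with generator $\mathbf Z$ is a process with paths in $\bar C^-[0,1]$ that is max-stable (for iid copies $\boldsymbol\eta_i$ and each $n$ there are $a_n>0,b_n\in C[0,1]$ with $\boldsymbol\eta=_D\max_{i\le n}(\boldsymbol\eta_i-b_n)/a_n$), has margins $P(\eta_t\le x)=e^x$, $x\le0$, and satisfies $P(\max_{t\in K_j}\eta_t\le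 x_j,1\le j\le d)=\exp(-E(\max_j|x_j|\max_{t\in K_j}Z_t))$ for compact $K_j\subset[0,1]$, $x_j\le 0$; equivalently $P(\boldsymbol\eta\le f)=\exp(-\|f\|_D)$ for $f\in\bar E^-[0,1]$. *)

(* Defs.v *)
From HB Require Import structures.
From mathcomp Require Import all_boot all_order all_algebra.
From mathcomp Require Import all_classical all_reals all_analysis.
Set Implicit Arguments. Unset Strict Implicit. Unset Printing Implicit Defensive.
Import Order.TTheory GRing.Theory Num.Theory.
Import numFieldNormedType.Exports.
Local Open Scope classical_set_scope.
Local Open Scope ring_scope.

Section Defs.
Context {R : realType}.

(* The unit interval [0,1] as a subset of R; functions on [0,1] are
   represented as functions R -> R of which only the restriction to [0,1]
   matters. *)
Definition I01 : set R := `[0, 1].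

Definition discont_at (f : R -> R) (t : R) : Prop :=
  ~ (f @ within I01 (nbhs t) --> f t).

Definition E01 (f : R -> R) : Prop :=
  (exists M : R, forall t, I01 t -> `|f t| <= M) /\
  finite_set [set t | I01 t /\ discont_at f t].

Definition E01neg (f : R -> R) : Prop := E01 f /\ (forall t, I01 t -> f t <= 0).

Definition C01neg (f : R -> R) : Prop :=
  {within I01, continuous f} /\ (forall t, I01 t -> f t <= 0).

Definition supnorm (f : R -> R) : R := sup [set `|f t| | t in I01].

Definition Dnorm {d} {Om : measurableType d} (Q : probability Om R)
  (Z : Om -> R -> R) (f : R -> R) : \bar R :=
  (\int[Q]_w ereal_sup [set (`|f t| * Z w t)%:E | t in I01])%E.

Definition is_generator {d} {Om : measurableType d} (Q : probability Om R)
  (Z : Om -> R -> R) : Prop :=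
  (forall t, I01 t -> measurable_fun setT (fun w => Z w t)) /\
  (forall w, {within I01, continuous (Z w)}) /\
  (forall w t, I01 t -> 0 <= Z w t) /\
  (exists m : R, 1 <= m /\
     {ae Q, forall w, ereal_sup [set (Z w t)%:E | t in I01] = m%:E}) /\
  (forall t, I01 t -> (\int[Q]_w (Z w t)%:E = 1)%E).

Definition ev_le {T : Type} (eta : T -> R -> R) (f : R -> R) : set T :=
  [set w | forall t, I01 t -> eta w t <= f t].
Definition ev_lt {T : Type} (eta : T -> R -> R) (f : R -> R) : set T :=
  [set w | forall t, I01 t -> eta w t < f t].

Definition std_max_stable {d} {Om : measurableType d} (P : probability Om R)
  (eta : Om -> R -> R) {d'} {Om' : measurableType d'} (Q : probability Om' R)
  (Z : Om' -> R -> R) : Prop :=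
  is_generator Q Z /\
  (forall t, I01 t -> measurable_fun setT (fun w => eta w t)) /\
  (forall w, C01neg (eta w)) /\
  (* max-stability, via equality of the finite-dimensional distributions
     of eta and max_{i<=n}(eta_i - b_n)/a_n for iid copies eta_i *)
  (forall n : nat, exists a : R, exists b : R -> R,
     0 < a /\ {within I01, continuous b} /\
     forall (k : nat) (ts : 'I_k -> R) (xs : 'I_k -> R),
       (forall j, I01 (ts j)) ->
       fine (P [set w | forall j, eta w (ts j) <= xs j]) =
       fine (P [set w | forall j, eta w (ts j) <= a * xs j + b (ts j)])
         ^+ n.+1) /\
  (forall t x, I01 t -> x <= 0 -> P [set w | eta w t <= x] = (expR x)%:E) /\
  (forall (k : nat) (K : 'I_k.+1 -> set R) (x : 'I_k.+1 -> R),
     (forall j, compact (K j) /\ K j `<=` I01 /\ K j !=set0) ->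
     (forall j, x j <= 0) ->
     P [set w | forall j t, K j t -> eta w t <= x j] =
     expeR (- (\int[Q]_w
        ereal_sup [set e | exists j t, K j t /\ e = (`|x j| * Z w t)%:E]))%E).

Definition Gfun {d} {Om : measurableType d} (P : probability Om R)
  (eta : Om -> R -> R) (f : R -> R) : R := fine (P (ev_le eta f)).

Definition C01neg_boundary (A : set (R -> R)) : set (R -> R) :=
  [set g | C01neg g /\ forall e : R, 0 < e ->
     (exists h, C01neg h /\ A h /\ supnorm (g \- h) < e) /\
     (exists h, C01neg h /\ ~ A h /\ supnorm (g \- h) < e)].

End Defs.

(* Main.v *)
Require Import Defs.
From HB Require Import structures.
From mathcomp Require Import all_boot all_order all_algebra.
From mathcomp Require Import all_classical all_reals all_analysis.
From mathcomp Require Import measurable_realfun.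
From mathcomp Require Import ring lra.
Import Order.TTheory GRing.Theory Num.Theory.
Import numFieldNormedType.Exports.
Local Open Scope classical_set_scope.
Local Open Scope ring_scope.

Section Aux.
Context {R : realType}.

Definition CW (phi : R -> R) (t : R) := phi @ within (@I01 R) (nbhs t) --> phi t.

Lemma I01E (t : R) : I01 t <-> 0 <= t <= 1.
Proof. by rewrite /I01 /= in_itv /=. Qed.

Lemma notdisc_CW (f : R -> R) t : ~ discont_at f t -> CW f t.
Proof. by move=> /contrapT. Qed.

Lemma CW_radius phi t : CW phi t -> 0 < phi t ->
  exists2 r : R, 0 < r & forall x, I01 x -> `|x - t| < r -> 0 < phi x.
Proof.
move=> c p; have := cvgr_gt _ c _ p.
rewrite near_withinE => H0. have : {near nbhs t, I01 `<=` (fun t => 0 < phi t)} by apply: H0; exact: within_filter. move=> /nbhs_ballP[r r0 H]; exists r => // x Ix xt.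
apply: (H x) => //; rewrite /ball /= distrC //.
Qed.


Lemma rat_near (a b t r : R) : a < b -> a <= t <= b -> 0 < r ->
  exists q : rat, a <= ratr q <= b /\ `|ratr q - t| < r.
Proof.
move=> ab /andP[aT tb] r0.
have [tb'|] := ltP t b.
  have : t < Num.min (t + r) b by rewrite lt_min tb' andbT ltrDl.
  move=> /rat_in_itvoo[q]; rewrite in_itv /= lt_min => /andP[tq /andP[qr qb]].
  exists q; split; first by rewrite (ltW qb) andbT (le_trans aT) // ltW.
  by rewrite gtr0_norm ?subr_gt0 // ltrBlDl.
move=> bt; have tb2 : t = b by apply/eqP; rewrite eq_le tb bt.
have : Num.max (t - r) a < t by rewrite gt_max tb2 ab andbT ltrBlDr ltrDl.
move=> /rat_in_itvoo[q]; rewrite in_itv /= gt_max => /andP[/andP[rq aq] qt].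
exists q; split; first by rewrite (ltW aq) /= -tb2 ltW.
by rewrite ltr0_norm ?subr_lt0 // opprB ltrBlDl -ltrBlDr.
Qed.

Lemma DL (a b t : R) phi : a < b -> 0 <= a -> b <= 1 -> a <= t <= b ->
  CW phi t -> 0 < phi t -> exists q : rat, a <= ratr q <= b /\ 0 < phi (ratr q).
Proof.
move=> ab a0 b1 abt c p; have [r r0 H] := @CW_radius phi t c p.
have [q [/andP[aq qb] qt]] := @rat_near a b t r ab abt r0.
exists q; split; first by rewrite aq qb.
apply: H => //; apply/I01E; rewrite (le_trans a0 aq) /=; exact: le_trans qb b1.
Qed.

Lemma DL01 (f phi : R -> R) t : I01 t -> 0 < phi t ->
  (~ discont_at f t -> CW phi t) ->
  (I01 t /\ discont_at f t) \/ exists q : rat, @I01 R (ratr q) /\ 0 < phi (ratr q).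
Proof.
move=> It p c; have [d|nd] := pselect (discont_at f t); first by left.
right; have [q [qI pq]] := @DL 0 1 t phi (@ltr01 R) (lexx 0) (lexx 1) (proj1 (I01E t) It) (c nd) p.
by exists q; split => //; exact/I01E.
Qed.

Lemma DL2 (f phi1 phi2 : R -> R) t : I01 t -> 0 < phi1 t -> 0 < phi2 t ->
  (~ discont_at f t -> CW phi1 t /\ CW phi2 t) ->
  (I01 t /\ discont_at f t) \/
  exists q : rat, @I01 R (ratr q) /\ 0 < phi1 (ratr q) /\ 0 < phi2 (ratr q).
Proof.
move=> It p1 p2 c; have [d|nd] := pselect (discont_at f t); first by left.
right; have [c1 c2] := c nd.
have [r1 r10 H1] := @CW_radius phi1 t c1 p1.
have [r2 r20 H2] := @CW_radius phi2 t c2 p2.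
have r0 : 0 < Num.min r1 r2 by rewrite lt_min r10 r20.
have [q [/andP[q0 q1] qt]] := @rat_near 0 1 t _ (@ltr01 R) (proj1 (I01E t) It) r0.
have Iq : @I01 R (ratr q) by apply/I01E; rewrite q0 q1.
move: qt; rewrite lt_min => /andP[qt1 qt2].
by exists q; split => //; split; [exact: H1|exact: H2].
Qed.

Lemma fin_iso (D : set R) t : finite_set D -> ~ D t ->
  exists2 r : R, 0 < r & forall x, D x -> r <= `|x - t|.
Proof.
move=> /finite_fsetP[B ->] nt.
exists (\big[Num.min/1]_(x <- finmap.enum_fset B) `|x - t|).
  rewrite big_seq; apply: (big_ind (fun y => 0 < y)) => //.
    by move=> ? ? ? ?; rewrite lt_min; apply/andP.
  move=> x xB; rewrite normr_gt0 subr_eq0; apply/negP => /eqP xt; apply: nt.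
  by rewrite -xt.
move=> x Bx; have Bx' : x \in finmap.enum_fset B by [].
elim: (finmap.enum_fset B) Bx' => // y s IH; rewrite in_cons big_cons.
case/orP => [/eqP->|/IH h]; first by rewrite ge_min lexx.
by rewrite ge_min h orbT.
Qed.


Lemma bigcup_cnt_measurable d (T : measurableType d) (X : Type) (S : set X)
  (F : X -> set T) : countable S -> (forall x, S x -> measurable (F x)) ->
  measurable (\bigcup_(x in S) F x).
Proof.
move=> /countable_injP[f finj] mF.
pose G n := \bigcup_(x in [set x | S x /\ f x = n]) F x.
have -> : \bigcup_(x in S) F x = \bigcup_(n in f @` S) G n.
  apply/seteqP; split => [w [x Sx Fw]|w [n [x Sx <-] [y [Sy fy] Fw]]].
    by exists (f x); [exists x|exists x].
  by exists y.
apply: bigcup_measurable => _ [x Sx <-].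
have -> : G (f x) = F x; last exact: mF.
apply/seteqP; split => [w [y [Sy fy] Fw]|w Fw]; last by exists x.
by have <- := finj y x (mem_set Sy) (mem_set Sx) fy.
Qed.

Lemma bigcap_cnt_measurable d (T : measurableType d) (X : Type) (S : set X)
  (F : X -> set T) : countable S -> (forall x, S x -> measurable (F x)) ->
  measurable (\bigcap_(x in S) F x).
Proof.
move=> cS mF; rewrite -[X in measurable X]setCK setC_bigcap; apply: measurableC.
by apply: bigcup_cnt_measurable => // x Sx; exact/measurableC/mF.
Qed.

Lemma CW_cont (g : R -> R) t : {within I01, continuous g} -> I01 t -> CW g t.
Proof. by move=> /subspace_continuousP; apply. Qed.

Lemma CWB (g h : R -> R) t : CW g t -> CW h t -> CW (fun x => g x - h x) t.
Proof. by move=> cg ch; apply: cvgB. Qed.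

Lemma CWD (g h : R -> R) t : CW g t -> CW h t -> CW (fun x => g x + h x) t.
Proof. by move=> cg ch; apply: cvgD. Qed.

Lemma CWM (g h : R -> R) t : CW g t -> CW h t -> CW (fun x => g x * h x) t.
Proof. by move=> cg ch; apply: cvgM. Qed.

Lemma CWC (c : R) t : CW (fun _ => c) t.
Proof. exact: cvg_cst. Qed.

Lemma CWN (g : R -> R) t : CW g t -> CW (fun x => `|g x|) t.
Proof. by move=> cg; apply: cvg_norm. Qed.

Lemma rat_itv (t r : R) : I01 t -> 0 < r -> exists q1 q2 : rat,
  [/\ 0 <= ratr q1 :> R, ratr q1 < ratr q2 :> R, ratr q2 <= 1 :> R,
     ratr q1 <= t <= ratr q2 & `|ratr q1 - t| < r /\ `|ratr q2 - t| < r].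
Proof.
move=> /I01E /andP[t0 t1] r0.
have [q2 [q2t q21 q2s q2r]] : exists q2 : rat, [/\ t <= ratr q2, ratr q2 <= 1 :> R,
    (t < 1 -> t < ratr q2) & `|ratr q2 - t| < r].
  have [tl|] := ltP t 1.
    have : t < Num.min (t + r) 1 by rewrite lt_min tl andbT ltrDl.
    move=> /rat_in_itvoo[q]; rewrite in_itv /= lt_min => /andP[tq /andP[qr q1]].
    exists q; split; [exact: ltW|exact: ltW|by []|].
    by rewrite gtr0_norm ?subr_gt0 // ltrBlDl.
  move=> t1'; have te : t = 1 by apply/eqP; rewrite eq_le t1 t1'.
  exists 1%R; rewrite rmorph1 te subrr normr0; split => //; by rewrite ltxx.
have [q1 [q1t q10 q1s q1r]] : exists q1 : rat, [/\ ratr q1 <= t, 0 <= ratr q1 :> R,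
    (0 < t -> ratr q1 < t) & `|ratr q1 - t| < r].
  have [tl|] := ltP 0 t.
    have : Num.max (t - r) 0 < t by rewrite gt_max tl andbT ltrBlDr ltrDl.
    move=> /rat_in_itvoo[q]; rewrite in_itv /= gt_max => /andP[/andP[rq q0] qt].
    exists q; split; [exact: ltW|exact: ltW|by []|].
    by rewrite ltr0_norm ?subr_lt0 // opprB ltrBlDl -ltrBlDr.
  move=> t0'; have te : t = 0 by apply/eqP; rewrite eq_le t0 t0'.
  exists 0%R; rewrite rmorph0 te subrr normr0; split => //; by rewrite ltxx.
exists q1, q2; split => //; last by rewrite q1t q2t.
have [tp|] := ltP 0 t; first exact: lt_le_trans (q1s tp) q2t.
move=> t0'; have te : t = 0 by apply/eqP; rewrite eq_le t0 t0'.
apply: le_lt_trans q1t _; apply: q2s; rewrite te; exact: ltr01.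
Qed.

Section OmSec.
Context d (Om : measurableType d).

Lemma mpre (g : Om -> R) (B : set R) : measurable_fun setT g -> measurable B ->
  measurable [set w | B (g w)].
Proof. by move=> mg mB; have := mg measurableT B mB; rewrite setTI. Qed.

Lemma m_le (g : Om -> R) c : measurable_fun setT g -> measurable [set w | g w <= c].
Proof.
move=> mg; have := @mpre g `]-oo, c]%classic mg (measurable_itv _).
by congr measurable; apply/seteqP; split => w /=; rewrite in_itv.
Qed.

Lemma m_lt (g : Om -> R) c : measurable_fun setT g -> measurable [set w | c < g w].
Proof.
move=> mg; have := @mpre g `]c, +oo[%classic mg (measurable_itv _).
by congr measurable; apply/seteqP; split => w /=; rewrite in_itv /= andbT.
Qed.

Lemma m_ge (g : Om -> R) c : measurable_fun setT g -> measurable [set w | c <= g w].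
Proof.
move=> mg; have := @mpre g `[c, +oo[%classic mg (measurable_itv _).
by congr measurable; apply/seteqP; split => w /=; rewrite in_itv /= andbT.
Qed.

Lemma m_imp (P : Prop) (A : set Om) : (P -> measurable A) -> measurable [set w | P -> A w].
Proof.
case: (pselect P) => [p|np] mA.
  have -> : [set w | P -> A w] = A by apply/seteqP; split => w /= h //; exact: h.
  exact: mA.
by have -> : [set w | P -> A w] = setT by apply/seteqP; split => w //= _ /np.
Qed.

Lemma m_and (P : Prop) (A : set Om) : (P -> measurable A) -> measurable [set w | P /\ A w].
Proof.
case: (pselect P) => [p|np] mA.
  have -> : [set w | P /\ A w] = A by apply/seteqP; split => w /=; [case|].
  exact: mA.
by have -> : [set w | P /\ A w] = set0 by apply/seteqP; split => w //= [].
Qed.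

Variable eta : Om -> R -> R.
Hypothesis eta_m : forall t, I01 t -> measurable_fun setT (fun w => eta w t).
Hypothesis eta_c : forall w, {within I01, continuous (eta w)}.

Lemma ev_le_measurable f : finite_set [set t | I01 t /\ discont_at f t] ->
  measurable (ev_le eta f).
Proof.
move=> fD.
have -> : ev_le eta f = \bigcap_(t in [set t | I01 t /\ discont_at f t])
    [set w | eta w t <= f t] `&`
    \bigcap_(q in [set: rat]) [set w | @I01 R (ratr q) -> eta w (ratr q) <= f (ratr q)].
  apply/seteqP; split => [w H|w [H1 H2] t It].
    by split => [t [It _]|q _ Iq]; exact: H.
  rewrite leNgt; apply/negP => ft.
  have := @DL01 f (fun x => eta w x - f x) t It; rewrite subr_gt0 => /(_ ft).
  case.
  - by move=> nd; apply: CWB; [exact: CW_cont|exact: notdisc_CW].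
  - by move=> /H1 => /= h; move: ft; rewrite ltNge h.
  - by move=> [q [Iq]]; rewrite subr_gt0 => lt; have := H2 q I Iq; rewrite leNgt lt.
apply: measurableI.
  apply: bigcap_cnt_measurable; first exact: finite_set_countable.
  by move=> t [It _]; apply: m_le; exact: eta_m.
apply: bigcap_cnt_measurable => // q _; apply: m_imp => Iq; apply: m_le; exact: eta_m.
Qed.

Definition GI (f : R -> R) (q1 q2 : rat) : Prop :=
  [/\ 0 <= ratr q1 :> R, ratr q1 < ratr q2 :> R, ratr q2 <= 1 :> R &
     forall x : R, ratr q1 <= x <= ratr q2 -> ~ discont_at f x].

Local Notation rt := (@ratr R).

Lemma ev_lt_measurable f : finite_set [set t | I01 t /\ discont_at f t] ->
  measurable (ev_lt eta f).
Proof.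
move=> fD.
pose IP q1 q2 := [set w | GI f q1 q2 /\ forall n : nat, exists q : rat,
   rt q1 <= rt q <= rt q2 /\ f (rt q) - n.+1%:R^-1 < eta w (rt q)].
have -> : ev_lt eta f = ~` (\bigcup_(t in [set t | I01 t /\ discont_at f t])
    [set w | f t <= eta w t] `|` \bigcup_(q1 in [set: rat]) \bigcup_(q2 in [set: rat]) IP q1 q2).
  apply/seteqP; split => [w H|w H t It].
    move=> [[t [It _]] /=|[q1 _ [q2 _ [[q10 q12 q21 nd] Hn]]]].
      by rewrite leNgt H.
    pose phi x := f x - eta w x.
    have cphi : {within `[rt q1, rt q2], continuous phi}.
      apply/subspace_continuousP => x; rewrite /= in_itv /= => /andP[x1 x2].
      have Ix : I01 x by apply/I01E; rewrite (le_trans q10 x1) (le_trans x2 q21).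
      have : CW phi x.
        apply: CWB; last exact: CW_cont.
        by apply: notdisc_CW; apply: nd; rewrite x1 x2.
      by apply: cvg_trans; apply: cvg_app; apply: within_subset => y /=;
        rewrite in_itv /= => /andP[y1 y2]; apply/I01E;
        rewrite (le_trans q10 y1) (le_trans y2 q21).
    have [c cI cmin] := EVT_min (ltW q12) cphi.
    move: cI; rewrite in_itv /= => /andP[c1 c2].
    have Ic : I01 c by apply/I01E; rewrite (le_trans q10 c1) (le_trans c2 q21).
    have pc : 0 < phi c by rewrite /phi subr_gt0; exact: H.
    have [k] := ltr_add_invr pc; rewrite add0r => kc.
    have [q [/andP[q1q qq2] fq]] := Hn k.
    have := cmin (rt q); rewrite in_itv /= q1q qq2 => /(_ isT).
    rewrite /phi => h; move: fq; rewrite ltrBlDr -ltrBlDl => fq.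
    by have := lt_le_trans kc h; rewrite ltNge (ltW fq).
  rewrite ltNge; apply/negP => ft; apply: H.
  have [dt|nd] := pselect (discont_at f t); first by left; exists t.
  right.
  have [r r0 Hr] := @fin_iso [set t | I01 t /\ discont_at f t] t fD (fun h => nd h.2).
  have [q1 [q2 [q10 q12 q21 /andP[q1t tq2] [r1 r2]]]] := @rat_itv t r It r0.
  exists q1 => //; exists q2 => //; split.
    split => // x /andP[x1 x2] dx.
    have Ix : I01 x by apply/I01E; rewrite (le_trans q10 x1) (le_trans x2 q21).
    have := Hr x (conj Ix dx); apply/negP; rewrite -ltNge.
    have [xt|tx] := leP x t.
      by rewrite ler0_norm ?subr_le0 // opprB (le_lt_trans _ r1) // ler0_norm ?subr_le0 // opprB lerB.
    by rewrite gtr0_norm ?subr_gt0 // (le_lt_trans _ r2) // ger0_norm ?subr_ge0 // lerB.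
  move=> n.
  have := @DL (rt q1) (rt q2) t (fun x => eta w x - (f x - n.+1%:R^-1)) q12 q10 q21.
  rewrite q1t tq2 => /(_ isT).
  case.
  - apply: CWB; first exact: CW_cont.
    by apply: CWB; [exact: notdisc_CW|exact: CWC].
  - by rewrite subr_gt0 ltrBlDr ltr_pwDr.
  - by move=> q [qI]; rewrite subr_gt0 => h; exists q.
apply: measurableC; apply: measurableU.
  apply: bigcup_cnt_measurable; first exact: finite_set_countable.
  by move=> t [It _]; apply: m_ge; exact: eta_m.
apply: bigcup_cnt_measurable => // q1 _; apply: bigcup_cnt_measurable => // q2 _.
rewrite /IP; apply: m_and => -[q10 q12 q21 _].
suff : measurable (\bigcap_(n in [set: nat]) \bigcup_(q in [set: rat])
   [set w | rt q1 <= rt q <= rt q2 /\ f (rt q) - n.+1%:R^-1 < eta w (rt q)]).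
  congr measurable; apply/seteqP; split => [w H n|w H n _].
    by have [q _ ?] := H n I; exists q.
  by have [q ?] := H n; exists q.
apply: bigcap_cnt_measurable => // n _; apply: bigcup_cnt_measurable => // q _.
apply: m_and => /andP[q1q qq2]; apply: m_lt; apply: eta_m; apply/I01E.
by rewrite (le_trans q10 q1q) (le_trans qq2 q21).
Qed.

Definition Bchar (f : R -> R) := [set w | (forall t, I01 t -> eta w t <= f t) /\
  forall n : nat, exists t, I01 t /\ f t < 0 /\ f t - n.+1%:R^-1 < eta w t].

Lemma Bchar_measurable f : finite_set [set t | I01 t /\ discont_at f t] ->
  measurable (Bchar f).
Proof.
move=> fD.
suff : measurable (ev_le eta f `&` \bigcap_(n in [set: nat])
  (\bigcup_(t in [set t | I01 t /\ discont_at f t])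
     [set w | f t < 0 /\ f t - n.+1%:R^-1 < eta w t] `|`
   \bigcup_(q in [set: rat]) [set w | I01 (rt q) /\ (f (rt q) < 0 /\ f (rt q) - n.+1%:R^-1 < eta w (rt q))])).
  congr measurable; apply/seteqP; split => [w [H1 H2]|w [H1 H2]].
    split => // n; have [[t [It _] [? ?]]|[q _ [Iq [? ?]]]] := H2 n I.
      by exists t.
    by exists (rt q).
  split => // n _; have [t [It [ft0 ft]]] := H2 n.
  have := @DL2 f (fun x => - f x) (fun x => eta w x - (f x - n.+1%:R^-1)) t It.
  rewrite oppr_gt0 subr_gt0 => /(_ ft0 ft).
  case.
  - move=> nd; split; first by apply: (@cvgN _ _ _ _ _ f (f t)); exact: notdisc_CW.
    apply: CWB; first exact: CW_cont.
    by apply: CWB; [exact: notdisc_CW|exact: CWC].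
  - by move=> h; left; exists t.
  - by move=> [q [Iq]]; rewrite oppr_gt0 subr_gt0 => -[? ?]; right; exists q.
apply: measurableI; first exact: ev_le_measurable.
apply: bigcap_cnt_measurable => // n _; apply: measurableU.
  apply: bigcup_cnt_measurable; first exact: finite_set_countable.
  by move=> t [It _]; apply: m_and => _; apply: m_lt; exact: eta_m.
apply: bigcup_cnt_measurable => // q _; apply: m_and => Iq; apply: m_and => _.
by apply: m_lt; exact: eta_m.
Qed.

End OmSec.

Section ZSec.
Context d' (Om' : measurableType d').
Variable Z : Om' -> R -> R.
Hypothesis Z_m : forall t, I01 t -> measurable_fun setT (fun w => Z w t).
Hypothesis Z_c : forall w, {within I01, continuous (Z w)}.
Local Notation rt := (@ratr R).

Definition Fm (f : R -> R) (w : Om') : \bar R :=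
  ereal_sup [set (`|f t| * Z w t)%:E | t in I01].

Lemma Fm_measurable f : finite_set [set t | I01 t /\ discont_at f t] ->
  measurable_fun setT (Fm f).
Proof.
move=> fD.
apply: (measurability _ (measurable_realfun.ErealGenOInfty.measurableE R)) => _ /= -[_ [r ->] <-].

suff : measurable (\bigcup_(t in [set t | I01 t /\ discont_at f t])
     [set w | r < `|f t| * Z w t] `|`
   \bigcup_(q in [set: rat]) [set w | I01 (rt q) /\ r < `|f (rt q)| * Z w (rt q)]).
  congr measurable; apply/seteqP; split => [w|w [_ /=]].
    case => [[t [It _] /= h]|[q _ [Iq /= h]]]; split => //=; rewrite in_itv /= andbT.
      rewrite /Fm; apply: (@lt_le_trans _ _ ((`|f t| * Z w t)%:E)); first by rewrite lte_fin.
      by apply: ereal_sup_ubound; exists t.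
    rewrite /Fm; apply: (@lt_le_trans _ _ ((`|f (rt q)| * Z w (rt q))%:E)); first by rewrite lte_fin.
    by apply: ereal_sup_ubound; exists (rt q).
  rewrite in_itv /= andbT => /ereal_sup_gt[_ [t It <-]]; rewrite lte_fin => h.
  have := @DL01 f (fun x => `|f x| * Z w x - r) t It; rewrite subr_gt0 => /(_ h).
  case.
  - move=> nd; apply: CWB; last exact: CWC.
    by apply: CWM; [apply: CWN; exact: notdisc_CW|exact: CW_cont].
  - by move=> h'; left; exists t.
  - by move=> [q [Iq]]; rewrite subr_gt0 => h'; right; exists q.
have mZ t : I01 t -> measurable_fun setT (fun w => `|f t| * Z w t).
  by move=> It; apply: measurable_funM => //; exact: Z_m.
apply: measurableU.
  apply: bigcup_cnt_measurable; first exact: finite_set_countable.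
  by move=> t [It _]; apply: m_lt; exact: mZ.
apply: bigcup_cnt_measurable => // q _; apply: m_and => Iq.
by apply: m_lt; exact: mZ.
Qed.

Definition Msup (w : Om') : \bar R := ereal_sup [set (Z w t)%:E | t in I01].

Hypothesis Z_ge0 : forall w t, I01 t -> 0 <= Z w t.

Lemma I01_0 : @I01 R 0. Proof. by apply/I01E; rewrite lexx ler01. Qed.

Lemma Fm_ge0 f w : (0 <= Fm f w)%E.
Proof.
apply: (@le_trans _ _ ((`|f 0| * Z w 0)%:E)).
  by rewrite lee_fin mulr_ge0 //; apply: Z_ge0; exact: I01_0.
by apply: ereal_sup_ubound; exists 0 => //; exact: I01_0.
Qed.

Lemma Fm_le f g (del : R) w : 0 <= del ->
  (forall t, I01 t -> `|g t| <= `|f t| + del) ->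
  (Fm g w <= Fm f w + del%:E * Msup w)%E.
Proof.
move=> d0 H; apply: ge_ereal_sup => _ [t It <-].
apply: (@le_trans _ _ ((`|f t| * Z w t)%:E + del%:E * (Z w t)%:E)%E).
  rewrite -EFinM -EFinD lee_fin -mulrDl ler_wpM2r //; [exact: Z_ge0|exact: H].
apply: leeD; first by apply: ereal_sup_ubound; exists t.
apply: lee_wpmul2l; first by rewrite lee_fin.
by apply: ereal_sup_ubound; exists t.
Qed.

Variable Q : probability Om' R.
Variable m : R.
Hypothesis m0 : 0 <= m.
Hypothesis Mae : {ae Q, forall w, ereal_sup [set (Z w t)%:E | t in I01] = m%:E}.

Lemma Dnorm_le f g (del : R) : 0 <= del ->
  finite_set [set t | I01 t /\ discont_at f t] ->
  finite_set [set t | I01 t /\ discont_at g t] ->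
  (forall t, I01 t -> `|g t| <= `|f t| + del) ->
  (Dnorm Q Z g <= Dnorm Q Z f + (del * m)%:E)%E.
Proof.
move=> d0 fD gD H; rewrite /Dnorm.
apply: (@le_trans _ _ (\int[Q]_w (Fm f w + (del * m)%:E))%E).
  apply: ae_ge0_le_integral => //.
  - by move=> w _; exact: Fm_ge0.
  - exact: Fm_measurable.
  - by move=> w _; apply: adde_ge0; [exact: Fm_ge0|rewrite lee_fin mulr_ge0].
  - by apply: emeasurable_funD => //; exact: Fm_measurable.
  apply: filterS Mae => w Mw _.
  have := @Fm_le f g del w d0 H; rewrite /Msup Mw -EFinM //.
rewrite ge0_integralD //.
- have QT : Q [set: Om'] = 1%E by exact: probability_setT.
  rewrite integral_cst // le_eqVlt; apply/orP; left; apply/eqP; congr (_ + _).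
  by rewrite -[RHS]mule1; congr (_ * _)%E.
- by move=> w _; exact: Fm_ge0.
- exact: Fm_measurable.
- by move=> w _; rewrite lee_fin mulr_ge0.
Qed.

End ZSec.

Lemma supnorm_ge (u : R -> R) t : (exists M, forall t, I01 t -> `|u t| <= M) ->
  I01 t -> `|u t| <= supnorm u.
Proof.
move=> [M HM] It; apply: sup_ubound; last by exists t.
by exists M => _ [x Ix <-]; exact: HM.
Qed.

Lemma supnorm_le (u : R -> R) c : (forall t, I01 t -> `|u t| <= c) -> supnorm u <= c.
Proof.
move=> H; apply: ge_sup; first by exists `|u 0|, 0 => //; exact: I01_0.
by move=> _ [x Ix <-]; exact: H.
Qed.

Lemma cont_bounded (g : R -> R) : {within I01, continuous g} ->
  exists M, forall t, I01 t -> `|g t| <= M.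
Proof.
move=> cg.
have cn : {within `[0, 1], continuous (fun x => `|g x|)}.
  apply/subspace_continuousP => x Ix; apply: CWN; exact: CW_cont.
have [c _ Hc] := EVT_max (@ler01 R) cn.
by exists `|g c| => t It; apply: Hc; exact: It.
Qed.

Lemma boundedB (u v : R -> R) : (exists M, forall t, I01 t -> `|u t| <= M) ->
  (exists M, forall t, I01 t -> `|v t| <= M) ->
  exists M, forall t, I01 t -> `|(u \- v) t| <= M.
Proof.
move=> [M1 H1] [M2 H2]; exists (M1 + M2) => t It /=.
by rewrite (le_trans (ler_normB _ _)) // lerD // ?H1 ?H2.
Qed.

Lemma expR_lip (a b : R) : 0 <= a -> 0 <= b ->
  `|expR (- a) - expR (- b)| <= `|a - b|.
Proof.
wlog ab : a b / a <= b.
  move=> W a0 b0; have [|ba] := leP a b; first by move=> ab; exact: W.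
  by rewrite distrC (distrC a); apply: W => //; exact: ltW.
move=> a0 b0.
have e1 : expR (- b) <= expR (- a) by rewrite ler_expR lerN2.
rewrite ger0_norm ?subr_ge0 // distrC ger0_norm ?subr_ge0 //.
have : 1 - (b - a) <= expR (- (b - a)) by exact: expR_ge1Dx.
have -> : expR (- b) = expR (- a) * expR (- (b - a)) by rewrite -expRD; congr expR; ring.
have ea1 : expR (- a) <= 1 by rewrite -expR0 ler_expR lerNl oppr0.
move=> h; rewrite -{1}(mulr1 (expR (- a))) -mulrBr.
apply: (@le_trans _ _ (1 * (1 - expR (- (b - a))))).
  apply: ler_wpM2r => //; rewrite subr_ge0 -expR0 ler_expR lerNl oppr0 subr_ge0 //.
by rewrite mul1r lerBlDl -lerBlDr.
Qed.

Lemma disc_shift (f : R -> R) (c : R) t :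
  discont_at (fun x => f x - c) t <-> discont_at f t.
Proof.
rewrite /discont_at; split => H1 H2; apply: H1.
  exact: (@CWB f (fun _ => c) t H2 (CWC c t)).
have := @CWD (fun x => f x - c) (fun _ => c) t H2 (CWC c t).
have E : (fun x => f x - c + c) = f by apply/funext => x; rewrite subrK.
by rewrite /CW E subrK.
Qed.

Lemma dist_lt (a b e : R) : `|a - b| < e -> a < b + e /\ b < a + e.
Proof.
move=> h; have h1 := ler_norm (a - b); have h2 := ler_norm (b - a).
rewrite distrC in h2; split; lra.
Qed.
Arguments dist_lt {a b e}.

Lemma bnd_char (f g : R -> R) : C01neg g ->
  (C01neg_boundary [set h | forall t, I01 t -> h t <= f t] g <->
   ((forall t, I01 t -> g t <= f t) /\
    forall n : nat, exists t, I01 t /\ f t < 0 /\ f t - n.+1%:R^-1 < g t)).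
Proof.
move=> [gc g0]; have gB := @cont_bounded g gc.
split => [[_ H]|[H1 H2]].
  split.
    move=> t It; apply: (proj1 (rwP (ler_addgt0Pr _ _))) => e e0.
    have [[h [[hc _] [Ah hs]]] _] := H e e0.
    have ht := @supnorm_ge (g \- h) t (@boundedB g h gB (@cont_bounded h hc)) It.
    have [h1 _] := dist_lt (le_lt_trans ht hs).
    have := Ah t It; lra.
  move=> n; have e0 : (0 : R) < n.+1%:R^-1 by rewrite invr_gt0.
  have [_ [h [[hc h0] [nA hs]]]] := H _ e0.
  have [t [It' ft]] : exists t, I01 t /\ f t < h t.
    apply: contrapT => nx; apply: nA => t It; rewrite leNgt; apply/negP => ft.
    by apply: nx; exists t.
  exists t; split => //; split; first exact: lt_le_trans ft (h0 t It').
  have ht := @supnorm_ge (g \- h) t (@boundedB g h gB (@cont_bounded h hc)) It'.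
  have [_ h1] := dist_lt (le_lt_trans ht hs).
  by rewrite ltrBlDr; exact: lt_trans ft h1.
split; first by [].
move=> e e0; split.
  exists g; split; first by split.
  split; first exact: H1.
  apply: (@le_lt_trans _ _ 0); last exact: e0.
  by apply: supnorm_le => t It /=; rewrite subrr normr0.
have e20 : 0 < e / 2 by rewrite divr_gt0.
have [n] := ltr_add_invr e20; rewrite add0r => ne.
have [t [It [ft0 ft]]] := H2 n.
pose h := (fun _ : R => 0) \min (fun x => g x + e / 2).
exists h; split; [split|split].
- apply: min_fun_continuous; first by move=> x; exact: cvg_cst.
  by move=> x; apply: cvgD; [exact: gc|exact: cvg_cst].
- by move=> x _; rewrite /h /= ge_min lexx.
- move=> Ah; have := Ah t It; rewrite /h /= ge_min; apply/negP; rewrite negb_or -!ltNge ft0 /=.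
  by move: ft; rewrite ltrBlDr => ft; apply: lt_trans ft _; rewrite ltrD2l.
- apply: (@le_lt_trans _ _ (e / 2)); last lra.
  apply: supnorm_le => x Ix; rewrite /h /=.
  have gx := g0 x Ix.
  have [le|lt] := leP (g x + e / 2) 0.
    rewrite opprD addrA subrr add0r normrN ger0_norm //; lra.
  rewrite ?subr0 ler0_norm //; lra.
Qed.

End Aux.

Lemma lim_le_real {R : realType} (y r m : R) : 0 < m ->
  (forall del : R, 0 < del -> y - del * m <= r) -> y <= r.
Proof.
move=> m0 H; apply/ler_addgt0Pr => e e0.
have := H (e / m) (divr_gt0 e0 m0); rewrite mulfVK ?gt_eqF //; lra.
Qed.

Lemma disc0 {R : realType} : finite_set [set t : R | I01 t /\ discont_at (fun _ => 0) t].
Proof.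
have -> : [set t : R | I01 t /\ discont_at (fun _ => 0) t] = set0.
  by apply/seteqP; split => t // [_ []]; exact: cvg_cst.
exact: finite_set0.
Qed.

Theorem mainTheorem4 (R : realType)
  (d : measure_display) (Om : measurableType d) (P : probability Om R)
  (eta : Om -> R -> R)
  (d' : measure_display) (Om' : measurableType d') (Q : probability Om' R)
  (Z : Om' -> R -> R) :
  std_max_stable P eta Q Z ->
  (forall f, E01neg f -> P (ev_le eta f) = expeR (- Dnorm Q Z f)%E) ->
  (* (i) G is continuous w.r.t. the sup-norm on \bar E^-[0,1] *)
  (forall f, E01neg f -> forall e : R, 0 < e -> exists2 del : R, 0 < del &
     forall g, E01neg g -> supnorm (f \- g) < del ->
       `|Gfun P eta f - Gfun P eta g| < e) /\
  (* (ii) P(eta <= f) = P(eta < f), and {g in C^- : g <= f} is a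
     continuity set of the distribution of eta *)
  (forall f, E01neg f ->
     P (ev_le eta f) = P (ev_lt eta f) /\
     P [set w | C01neg_boundary [set g | forall t, I01 t -> g t <= f t] (eta w)]
       = 0%E).
Proof.
move=> [[Zm [Zc [Zge0 [[m [m1 Mae]] _]]]] [etam [etaC _]]] HG.
have etac : forall w, {within I01, continuous (eta w)} by move=> w; exact: (etaC w).1.
have m0 : 0 < m by apply: lt_le_trans m1; exact: ltr01.
have m0' : 0 <= m := ltW m0.
have DL f g del := @Dnorm_le R d' Om' Z Zm Zc Zge0 Q m m0' Mae f g del.
have D0 : Dnorm Q Z (fun _ => 0) = 0%E.
  rewrite /Dnorm; apply: integral0_eq => w _.
  have -> : [set (`|(fun _ : R => 0 : R) t| * Z w t)%:E | t in I01] = [set 0%E].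
    apply/seteqP; split => [_ [t It <-]|_ ->]; first by rewrite normr0 mul0r.
    by exists 0; [exact: I01_0|rewrite normr0 mul0r].
  exact: ereal_sup1.
have Dfin : forall f, E01 f -> exists2 a : R, Dnorm Q Z f = a%:E & 0 <= a.
  move=> f [[M HM] fD].
  have M0 : 0 <= M by apply: le_trans (HM 0 I01_0).
  have h1 := DL (fun _ => 0) f M M0 disc0 fD.
  rewrite D0 add0e in h1.
  have {}h1 : (Dnorm Q Z f <= (M * m)%:E)%E.
    by apply: h1 => t It; rewrite normr0 add0r; exact: HM.
  have h0 : (0 <= Dnorm Q Z f)%E.
    by apply: integral_ge0 => w _; exact: (@Fm_ge0 R d' Om' Z Zge0 f w).
  exists (fine (Dnorm Q Z f)); last by rewrite fine_ge0.
  by rewrite fineK // ge0_fin_numE // (le_lt_trans h1) // ltry.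
have Gval : forall f, E01neg f -> forall a, Dnorm Q Z f = a%:E ->
    P (ev_le eta f) = (expR (- a))%:E.
  by move=> f fE a Da; rewrite HG // Da.
split.
  move=> f fE e e0; have [[[Mf HMf] fD] f0] := fE.
  exists (e / m); first by rewrite divr_gt0.
  move=> g gE hs; have [[[Mg HMg] gD] g0] := gE.
  set s := supnorm (f \- g).
  have Hs t : I01 t -> `|f t - g t| <= s.
    move=> It; apply: (@supnorm_ge R (f \- g) t) => //.
    by apply: boundedB; [exists Mf|exists Mg].
  have s0 : 0 <= s := le_trans (normr_ge0 _) (Hs 0 I01_0).
  have Hfg t : I01 t -> `|g t| <= `|f t| + s.
    move=> It; apply: (@le_trans _ _ (`|f t| + `|f t - g t|)); last by rewrite lerD2l; exact: Hs.
    have := ler_normB (f t) (f t - g t).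
    by have -> : f t - (f t - g t) = g t by ring.
  have Hgf t : I01 t -> `|f t| <= `|g t| + s.
    move=> It; apply: (@le_trans _ _ (`|g t| + `|f t - g t|)); last by rewrite lerD2l; exact: Hs.
    have := ler_normD (g t) (f t - g t).
    by have -> : g t + (f t - g t) = f t by ring.
  have [a Da a0] := Dfin f fE.1; have [b Db b0] := Dfin g gE.1.
  have hab := DL f g s s0 fD gD Hfg; rewrite Da Db -EFinD lee_fin in hab.
  have hba := DL g f s s0 gD fD Hgf; rewrite Da Db -EFinD lee_fin in hba.
  rewrite /Gfun (Gval f fE a Da) (Gval g gE b Db) /=.
  apply: le_lt_trans (expR_lip a b a0 b0) _.
  have sm : s * m < e by rewrite -ltr_pdivlMr.
  apply: le_lt_trans sm; rewrite ler_norml; apply/andP; split; lra.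
move=> f fE; have [[[Mf HMf] fD] f0] := fE.
have [a Da a0] := Dfin f fE.1.
pose fd (del : R) := fun x => f x - del.
have fdD del : [set t | I01 t /\ discont_at (fd del) t] = [set t | I01 t /\ discont_at f t].
  by apply/seteqP; split => t [It h]; split => //; [exact: (disc_shift f del t).1|
    exact: (disc_shift f del t).2].
have fdE del : 0 <= del -> E01neg (fd del).
  move=> d0; split; last by move=> t It; rewrite /fd; have := f0 t It; lra.
  split; last by rewrite fdD.
  exists (Mf + del) => t It; rewrite /fd; apply: le_trans (ler_normB _ _) _.
  by rewrite (ger0_norm d0) lerD2r; exact: HMf.
have bnd del : 0 < del -> exists2 ad : R, P (ev_le eta (fd del)) = (expR (- ad))%:E &
    expR (- a) - expR (- ad) <= del * m.
  move=> d0; have d0' := ltW d0.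
  have [ad Dad ad0] := Dfin _ (fdE del d0').1.
  exists ad; first exact: Gval (fdE del d0') ad Dad.
  have h1 := DL f (fd del) del d0' fD ((fdE del d0').1.2).
  have h2 := DL (fd del) f del d0' ((fdE del d0').1.2) fD.
  rewrite Da Dad -EFinD lee_fin in h1; rewrite Da Dad -EFinD lee_fin in h2.
  have {}h1 : ad <= a + del * m.
    apply: h1 => t It; rewrite /fd; apply: le_trans (ler_normB _ _) _.
    by rewrite (ger0_norm d0').
  have {}h2 : a <= ad + del * m.
    apply: h2 => t It; rewrite /fd; have := ler_normD (f t - del) del.
    by rewrite subrK (ger0_norm d0').
  apply: le_trans (ler_norm _) _; apply: le_trans (expR_lip a ad a0 ad0) _.
  rewrite ler_norml; apply/andP; split; lra.
have mle g : E01neg g -> measurable (ev_le eta g).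
  by move=> [[_ gD] _]; exact: ev_le_measurable.
have mlt : measurable (ev_lt eta f) := @ev_lt_measurable R d Om eta etam etac f fD.
have PfE := Gval f fE a Da.
split.
  have sub2 : ev_lt eta f `<=` ev_le eta f by move=> w H t It; exact: ltW (H t It).
  have Hle : (P (ev_lt eta f) <= P (ev_le eta f))%E.
    exact: le_measure (mem_set mlt) (mem_set (mle f fE)) sub2.
  have x0 : (0 <= P (ev_lt eta f))%E by exact: measure_ge0.
  have xfin : P (ev_lt eta f) \is a fin_num.
    by rewrite ge0_fin_numE // (le_lt_trans Hle) // PfE ltry.
  rewrite -(fineK xfin) PfE; apply/eqP; rewrite eq_le; apply/andP; split; last first.
    by rewrite -PfE fineK.
  rewrite lee_fin; apply: (@lim_le_real R _ _ m m0) => del d0.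
  have [ad Pad Had] := bnd del d0.
  have sub1 : ev_le eta (fd del) `<=` ev_lt eta f.
    by move=> w H t It; have := H t It; rewrite /fd => h; lra.
  have : (P (ev_le eta (fd del)) <= P (ev_lt eta f))%E.
    exact: le_measure (mem_set (mle _ (fdE del (ltW d0)))) (mem_set mlt) sub1.
  rewrite Pad -(fineK xfin) lee_fin => h; lra.
have Beq : [set w | C01neg_boundary [set g | forall t, I01 t -> g t <= f t] (eta w)] =
    Bchar d Om eta f.
  by apply/seteqP; split => w /=; rewrite (bnd_char f (eta w) (etaC w)).
rewrite Beq.
have mB := @Bchar_measurable R d Om eta etam etac f fD.
have z0 : (0 <= P (Bchar d Om eta f))%E by exact: measure_ge0.
have Bsub : Bchar d Om eta f `<=` ev_le eta f by move=> w [].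
have zle : (P (Bchar d Om eta f) <= P (ev_le eta f))%E.
  exact: le_measure (mem_set mB) (mem_set (mle f fE)) Bsub.
have zfin : P (Bchar d Om eta f) \is a fin_num.
  by rewrite ge0_fin_numE // (le_lt_trans zle) // PfE ltry.
rewrite -(fineK zfin); congr EFin; apply/eqP; rewrite eq_le; apply/andP; split; last first.
  by rewrite -lee_fin fineK.
apply: (@lim_le_real R _ _ m m0) => del d0.
have [ad Pad Had] := bnd del d0.
have mfd := mle _ (fdE del (ltW d0)).
have disj : ev_le eta (fd del) `&` Bchar d Om eta f = set0.
  apply/seteqP; split => // w [H1 [_ H2]].
  have [n] := ltr_add_invr d0; rewrite add0r => nd.
  have [t [It [_ ft]]] := H2 n; have := H1 t It; rewrite /fd => h; exfalso.
  move: nd ft h; generalize (n.+1%:R^-1 : R) => x; lra.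
have usub : ev_le eta (fd del) `|` Bchar d Om eta f `<=` ev_le eta f.
  move=> w [H t It|/Bsub H t It]; last exact: H.
  by have := H t It; rewrite /fd => h; lra.
have : (P (ev_le eta (fd del) `|` Bchar d Om eta f) <= P (ev_le eta f))%E.
  exact: le_measure (mem_set (measurableU _ _ mfd mB)) (mem_set (mle f fE)) usub.
have -> : P (ev_le eta (fd del) `|` Bchar d Om eta f) =
    (P (ev_le eta (fd del)) + P (Bchar d Om eta f))%E.
  exact: measureU.
rewrite Pad PfE -(fineK zfin) -EFinD lee_fin => h; lra.
Qed.
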